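(* Let $B$ be an $n\times N$ complex matrix with columns $x_1,\dots,x_N\in\mathbb{C}^n$ and rows $w_1,\dots,w_n\in\mathbb{C}^N$. Then $\binom{n+1}{2}\sum_{i,j}|\langle x_i|x_j\rangle|^{4} = \big(\sum_i\langle x_i|x_i\rangle^2\big)^2$ if and only if the vectors of the family $$\{w_i^{(2)} : 1\le i\le n\}\cup\{\sqrt2\, w_i\circ w_j : 1\le i<j\le n\}$$ all have the same length and are pairwise orthogonal.
   Context: For vectors of equal size, the Schur product $a\circ b$ is the entrywise product and $a^{(2)}=a\circ a$. $\langle x|y\rangle=\sum_t\overline{x_t}y_t$. *)

(* Defs.v *)
From HB Require Import structures.
From mathcomp Require Import all_boot all_order all_algebra all_field.
Set Implicit Arguments. Unset Strict Implicit. Unset Printing Implicit Defensive.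
Import Order.TTheory GRing.Theory Num.Theory.
Local Open Scope ring_scope.

Definition ip (m : nat) (x y : 'rV[algC]_m) : algC :=
  \sum_(t < m) (x 0 t)^* * y 0 t.

Definition schur (m : nat) (x y : 'rV[algC]_m) : 'rV[algC]_m :=
  \row_(t < m) (x 0 t * y 0 t).

Definition colv (n N : nat) (B : 'M[algC]_(n, N)) (i : 'I_N) : 'rV[algC]_n :=
  (col i B)^T.

Definition rowv (n N : nat) (B : 'M[algC]_(n, N)) (i : 'I_n) : 'rV[algC]_N :=
  row i B.

(* The family member indexed by (i,j) with i <= j:
   w_i^(2) if i = j, and sqrt 2 * (w_i o w_j) if i < j. *)
Definition fam (n N : nat) (B : 'M[algC]_(n, N)) (i j : 'I_n) : 'rV[algC]_N :=
  if i == j then schur (rowv B i) (rowv B i)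
  else sqrtC 2 *: schur (rowv B i) (rowv B j).

Definition equal_norm_orthogonal (n N : nat) (B : 'M[algC]_(n, N)) : Prop :=
  (forall i1 j1 i2 j2 : 'I_n, (i1 <= j1)%N -> (i2 <= j2)%N ->
     ip (fam B i1 j1) (fam B i1 j1) = ip (fam B i2 j2) (fam B i2 j2)) /\
  (forall i1 j1 i2 j2 : 'I_n, (i1 <= j1)%N -> (i2 <= j2)%N ->
     (i1, j1) != (i2, j2) -> ip (fam B i1 j1) (fam B i2 j2) = 0).

(* Main.v *)
Require Import Defs.
From HB Require Import structures.
From mathcomp Require Import all_boot all_order all_algebra all_field.
Import Order.TTheory GRing.Theory Num.Theory.
Set Implicit Arguments. Unset Strict Implicit.
Local Open Scope ring_scope.

Lemma sum_pred1 (T : finType) (P : pred T) (p : T) (g : T -> algC) :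
  P p -> \sum_(q | P q) (if p == q then g q else 0) = g p.
Proof.
move=> Pp; rewrite (bigD1 p) //= eqxx big1 ?addr0 // => q /andP[_ nq].
by rewrite eq_sym (negbTE nq).
Qed.

Lemma split_diag (T : finType) (P : pred T) (p : T) (F : T -> algC) :
  P p -> \sum_(q | P q) F q = F p + \sum_(q | P q) (if p == q then 0 else F q).
Proof.
move=> Pp; rewrite -{1}(sum_pred1 F Pp) -big_split /=; apply: eq_bigr => q _.
by case: eqP => _; rewrite ?addr0 ?add0r.
Qed.

Lemma sumc (T : finType) (P : pred T) (x : algC) : \sum_(q | P q) x = x *+ #|P|.
Proof. exact: sumr_const. Qed.

Lemma alg_arith (M Q O D : algC) (k : nat) : M = k%:R ->
  (M * (Q + O) - D ^+ 2) *+ 2 = ((Q *+ k + Q *+ k) - (D * D) *+ 2) + (M * O) *+ 2.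
Proof.
move=> ->; rewrite mulrDr expr2 -[Q *+ k]mulr_natl !mulr2n opprD.
rewrite -!addrA; congr (_ + _).
set a := _ * O; set b := - _; set c := _ * Q.
rewrite (addrCA b c) (addrCA a c); congr (c + _).
rewrite (addrCA a b); congr (b + _).
by rewrite addrA addrC.
Qed.

Lemma herm_id (T : finType) (P : pred T) (H : T -> T -> algC)
  (Hh : forall p q, H q p = (H p q)^*) :
  ((#|P|)%:R * (\sum_(p | P p) \sum_(q | P q) `|H p q| ^+ 2)
     - (\sum_(p | P p) H p p) ^+ 2) *+ 2
  = \sum_(p | P p) \sum_(q | P q) (`|H p p - H q q| ^+ 2
        + (#|P|)%:R * (if p == q then 0 else `|H p q| ^+ 2) *+ 2).
Proof.
have dR p : H p p \is Num.real by rewrite CrealE -Hh.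
have E1 : \sum_(p | P p) \sum_(q | P q) `|H p q| ^+ 2 =
   \sum_(p | P p) H p p ^+ 2 +
   \sum_(p | P p) \sum_(q | P q) (if p == q then 0 else `|H p q| ^+ 2).
  rewrite -big_split; apply: eq_bigr => p Pp.
  by rewrite (split_diag (fun q => `|H p q| ^+ 2) Pp) /= real_normK.
rewrite E1 (alg_arith _ _ _ (k := #|P|) (erefl _)).
rewrite [RHS](eq_bigr (fun p => \sum_(q | P q) `|H p p - H q q| ^+ 2 +
   (#|P|%:R * \sum_(q | P q) (if p == q then 0 else `|H p q| ^+ 2)) *+ 2)); last first.
  by move=> p _; rewrite big_split /= sumrMnl mulr_sumr.
rewrite big_split /= sumrMnl -mulr_sumr; congr (_ + _).
rewrite [RHS](eq_bigr (fun p => (H p p ^+ 2 *+ #|P| + \sum_(q | P q) H q q ^+ 2)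
   - (H p p * \sum_(q | P q) H q q) *+ 2)); last first.
  move=> p _; rewrite (eq_bigr (fun q => (H p p ^+ 2 + H q q ^+ 2) - (H p p * H q q) *+ 2)); last first.
    by move=> q _; rewrite real_normK ?rpredB // sqrrB addrAC.
  by rewrite sumrB big_split /= sumc sumrMnl mulr_sumr.
rewrite sumrB big_split /= sumrMnl sumc sumrMnl -mulr_suml.
by rewrite addrC.
Qed.

Lemma herm_cs (T : finType) (P : pred T) (H : T -> T -> algC)
  (Hh : forall p q, H q p = (H p q)^*) :
  (#|P|)%:R * (\sum_(p | P p) \sum_(q | P q) `|H p q| ^+ 2)
     = (\sum_(p | P p) H p p) ^+ 2 <->
  (forall p q, P p -> P q -> H p p = H q q) /\
  (forall p q, P p -> P q -> p != q -> H p q = 0).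
Proof.
set term := fun p q => `|H p p - H q q| ^+ 2
        + (#|P|)%:R * (if p == q then 0 else `|H p q| ^+ 2) *+ 2.
have ge0 p q : 0 <= term p q.
  rewrite /term addr_ge0 ?exprn_ge0 // mulrn_wge0 // mulr_ge0 ?ler0n //.
  by case: eqP => // _; rewrite exprn_ge0.
have key : (#|P|)%:R * (\sum_(p | P p) \sum_(q | P q) `|H p q| ^+ 2)
     = (\sum_(p | P p) H p p) ^+ 2 <-> (forall p q, P p -> P q -> term p q = 0).
  split=> [eq|h].
    have : \sum_(p | P p) \sum_(q | P q) term p q = 0.
      by rewrite -herm_id // eq subrr mul0rn.
    move=> /psumr_eq0P hs p q Pp Pq.
    have := hs (fun p _ => sumr_ge0 _ (fun q _ => ge0 p q)) p Pp.
    by move/psumr_eq0P; apply => // r _; apply: ge0.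
  have E2 (x : algC) : (x == 0) = (x *+ 2 == 0) by rewrite mulrn_eq0.
  apply/eqP; rewrite -subr_eq0 E2 herm_id //.
  by rewrite big1 // => p Pp; rewrite big1 // => q Pq; apply: h.
apply: (iff_trans key); split.
  move=> h; split.
    move=> p q Pp Pq; move: (h p q Pp Pq) => /eqP.
    rewrite /term paddr_eq0 ?exprn_ge0 // => [/andP[]|]; last first.
      by rewrite mulrn_wge0 // mulr_ge0 ?ler0n //; case: eqP => // _; rewrite exprn_ge0.
    by rewrite expf_eq0 /= normr_eq0 subr_eq0 => /eqP.
  move=> p q Pp Pq npq; move: (h p q Pp Pq) => /eqP.
  rewrite /term paddr_eq0 ?exprn_ge0 // => [/andP[_]|]; last first.
    by rewrite mulrn_wge0 // mulr_ge0 ?ler0n //; case: eqP => // _; rewrite exprn_ge0.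
  rewrite (negbTE npq) mulrn_eq0 /= mulf_eq0 pnatr_eq0 expf_eq0 /= normr_eq0.
  have : (0 < #|P|)%N by apply/card_gt0P; exists p.
  by rewrite lt0n => /negbTE -> /eqP.
move=> [h1 h2] p q Pp Pq; rewrite /term (h1 p q Pp Pq) subrr normr0 expr0n /=.
case: eqP => [_|/eqP npq]; first by rewrite mulr0 mul0rn addr0.
by rewrite h2 // normr0 expr0n /= mulr0 mul0rn addr0.
Qed.

Lemma sum_tri k : (\sum_(t < k) t.+1)%N = 'C(k.+1, 2).
Proof.
elim: k => [|k IH]; first by rewrite big_ord0.
by rewrite big_ord_recr /= IH [in RHS]binS bin1.
Qed.

Lemma inner_cnt n (t : 'I_n) : (\sum_(s < n | (s <= t)%N) 1)%N = t.+1.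
Proof.
case: n t => [[]//|n t].
have le : (t <= n)%N by rewrite -ltnS.
rewrite (big_ord_narrow_leq le).
by rewrite sum1_card card_ord.
Qed.

Lemma cardP n : #|[pred p : 'I_n * 'I_n | (p.1 <= p.2)%N]| = 'C(n.+1, 2).
Proof.
rewrite -sum1_card.
rewrite (eq_bigl (fun p : 'I_n * 'I_n => predT p.1 && (p.1 <= p.2)%N)) //.
rewrite -(pair_big_dep predT (fun s t : 'I_n => (s <= t)%N) (fun _ _ => 1%N)).
rewrite (exchange_big_dep predT) //=.
rewrite -sum_tri; apply: eq_bigr => t _.
exact: inner_cnt.
Qed.

Definition Pn n : pred ('I_n * 'I_n) := fun p => (p.1 <= p.2)%N.
Arguments Pn : clear implicits.

Lemma cardPn n : #|Pn n| = 'C(n.+1, 2).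
Proof. by rewrite -cardP; apply: eq_card. Qed.

Lemma colvE n N (B : 'M[algC]_(n, N)) i t : colv B i 0 t = B t i.
Proof. by rewrite /colv !mxE. Qed.

Lemma famE n N (B : 'M[algC]_(n, N)) s t i :
  fam B s t 0 i = if s == t then B s i * B s i else sqrtC 2 * (B s i * B t i).
Proof. by rewrite /fam; case: eqP => _; rewrite !mxE. Qed.

Lemma sym_split n (F : 'I_n * 'I_n -> algC) :
  \sum_p F p = \sum_(p | Pn n p) (F p + (if (p.1 < p.2)%N then F (p.2, p.1) else 0)).
Proof.
rewrite (bigID (Pn n)) /= big_split /=; congr (_ + _).
rewrite (reindex_inj (can_inj (@swap_pairK _ _))) /= -big_mkcondr.
apply: eq_bigl => p; rewrite /Pn /swap_pair /= -ltnNge.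
by case: (ltnP p.1 p.2) => [/ltnW ->|]; rewrite ?andbF.
Qed.

Lemma cM (x y : algC) : (x * y)^* = x^* * y^*.
Proof. exact: rmorphM. Qed.

Lemma cSum (I : finType) (P : pred I) (F : I -> algC) :
  (\sum_(i | P i) F i)^* = \sum_(i | P i) (F i)^*.
Proof. exact: rmorph_sum. Qed.

Lemma keyK n N (B : 'M[algC]_(n, N)) i j :
  ip (colv B i) (colv B j) ^+ 2 =
  \sum_(p | Pn n p) (fam B p.1 p.2 0 i)^* * fam B p.1 p.2 0 j.
Proof.
rewrite /ip (eq_bigr (fun t => (B t i)^* * B t j)); last by move=> t _; rewrite !colvE.
rewrite expr2 mulr_suml (eq_bigr (fun s => \sum_t ((B s i)^* * B s j) * ((B t i)^* * B t j)));
  last by move=> s _; rewrite mulr_sumr.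
rewrite pair_big /= (sym_split (fun p => ((B p.1 i)^* * B p.1 j) * ((B p.2 i)^* * B p.2 j))).
apply: eq_bigr => [[s t]]; rewrite /Pn /= => le; rewrite !famE.
case: eqP => [<-|/eqP ne].
  by rewrite ltnn addr0 rmorphM mulrACA.
have lt : (s < t)%N by rewrite ltn_neqAle ne le.
have s2 : (sqrtC 2)^* = sqrtC (2 : algC) by rewrite geC0_conj // sqrtC_ge0 ler0n.
rewrite lt !cM s2 [RHS]mulrACA -[sqrtC 2 * sqrtC 2]expr2 sqrtCK.
rewrite [X in _ = _ * X]mulrACA.
by rewrite [X in _ + X]mulrC mulr_natl mulr2n.
Qed.

Lemma herm_ip m (x y : 'rV[algC]_m) : ip y x = (ip x y)^*.
Proof.
rewrite /ip cSum; apply: eq_bigr => t _.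
by rewrite cM conjCK mulrC.
Qed.

Lemma sum4 n N (B : 'M[algC]_(n, N)) :
  \sum_(i < N) \sum_(j < N) `|ip (colv B i) (colv B j)| ^+ 4 =
  \sum_(p | Pn n p) \sum_(q | Pn n q) `|ip (fam B p.1 p.2) (fam B q.1 q.2)| ^+ 2.
Proof.
have L i j : `|ip (colv B i) (colv B j)| ^+ 4 =
   \sum_(p | Pn n p) \sum_(q | Pn n q)
     (((fam B p.1 p.2 0 i)^* * fam B p.1 p.2 0 j) *
      (fam B q.1 q.2 0 i * (fam B q.1 q.2 0 j)^*)).
  rewrite -[4%N]/(2 * 2)%N exprM -normrX normCK keyK cSum mulr_suml.
  apply: eq_bigr => p _; rewrite mulr_sumr; apply: eq_bigr => q _.
  by rewrite cM conjCK.
have R p q : `|ip (fam B p.1 p.2) (fam B q.1 q.2)| ^+ 2 =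
   \sum_(i < N) \sum_(j < N)
     (((fam B p.1 p.2 0 i)^* * fam B q.1 q.2 0 i) *
      (fam B p.1 p.2 0 j * (fam B q.1 q.2 0 j)^*)).
  rewrite normCK {2}/ip cSum /ip mulr_suml.
  apply: eq_bigr => i _; rewrite mulr_sumr; apply: eq_bigr => j _.
  by rewrite cM conjCK.
under eq_bigr => i _ do under eq_bigr => j _ do rewrite L.
rewrite [RHS](eq_bigr (fun p => \sum_(q | Pn n q) \sum_(i < N) \sum_(j < N)
     (((fam B p.1 p.2 0 i)^* * fam B q.1 q.2 0 i) *
      (fam B p.1 p.2 0 j * (fam B q.1 q.2 0 j)^*)))); last first.
  by move=> p _; apply: eq_bigr => q _; exact: R.
under eq_bigr => i _ do rewrite exchange_big.
under eq_bigr => i _ do under eq_bigr => p _ do rewrite exchange_big.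
rewrite exchange_big; apply: eq_bigr => p _.
rewrite exchange_big; apply: eq_bigr => q _.
apply: eq_bigr => i _; apply: eq_bigr => j _.
by rewrite mulrACA.
Qed.

Lemma sum2 n N (B : 'M[algC]_(n, N)) :
  \sum_(i < N) ip (colv B i) (colv B i) ^+ 2 =
  \sum_(p | Pn n p) ip (fam B p.1 p.2) (fam B p.1 p.2).
Proof.
under eq_bigr => i _ do rewrite keyK.
by rewrite exchange_big.
Qed.

Unset Implicit Arguments.

Theorem corollary5 (n N : nat) (B : 'M[algC]_(n, N)) :
  ('C(n.+1, 2))%:R * (\sum_(i < N) \sum_(j < N) `|ip (colv B i) (colv B j)| ^+ 4)
    = (\sum_(i < N) ip (colv B i) (colv B i) ^+ 2) ^+ 2
  <-> equal_norm_orthogonal B.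
Proof.
rewrite sum4 sum2 -cardPn.
apply: (iff_trans (@herm_cs _ (Pn n)
   (fun p q => ip (fam B p.1 p.2) (fam B q.1 q.2)) (fun p q => herm_ip _ _))).
split.
  move=> [h1 h2]; split=> i1 j1 i2 j2 l1 l2.
    exact: (h1 (i1, j1) (i2, j2) l1 l2).
  by move=> ne; exact: (h2 (i1, j1) (i2, j2) l1 l2 ne).
move=> [h1 h2]; split=> -[i1 j1] -[i2 j2] l1 l2; [exact: h1 | exact: h2].
Qed.
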